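(* Let $\delta>0$ and let $A,B,C,D$ be nonnegative constants with $A\in(0,1)$ and $C>0$. Then there exists a function $\varphi\in C^2((0,\delta])\cap C([0,\delta])$, depending on $A,B,C,D,\delta$, which is positive on $(0,\delta]$, solves $$\varphi''(r)+\Big(\frac{A}{r}+B\Big)\varphi'(r)=-C\qquad\text{for } r\in(0,\delta],$$ and satisfies: (i) $\varphi'(r)>0$ and $\varphi''(r)<0$ for all $r\in(0,\delta]$; (ii) $\varphi''(r)-\dfrac{\varphi'(r)}{r}\le -C$ for all $r\in(0,\delta]$; (iii) $\varphi(\delta)\ge D$; (iv) $\displaystyle\sup_{0<r\le\delta}\frac{\varphi(r)}{r^{1-A}}<+\infty$. *)

(* Defs.v *)
From Stdlib Require Export Reals.
Open Scope R_scope.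

Definition Ioc0 (d : R) : R -> Prop := fun r => 0 < r /\ r <= d.
Definition Icc0 (d : R) : R -> Prop := fun r => 0 <= r /\ r <= d.

Definition deriv_within (D : R -> Prop) (f : R -> R) (x l : R) : Prop :=
  limit1_in (fun y => (f y - f x) / (y - x)) (fun y => D y /\ y <> x) l x.

Definition cont_within (D : R -> Prop) (f : R -> R) (x : R) : Prop :=
  limit1_in f D (f x) x.

Definition C2_on (D : R -> Prop) (f f1 f2 : R -> R) : Prop :=
  forall x, D x ->
    deriv_within D f x (f1 x) /\ deriv_within D f1 x (f2 x) /\
    cont_within D f2 x.

(* Main.v *)
Require Import Defs.
From Coquelicot Require Import Coquelicot.
From Stdlib Require Import Reals Lra.
Open Scope R_scope.

Lemma dmul (f g : R -> R) (x a b : R) : is_derive f x a -> is_derive g x b ->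
  is_derive (fun t => f t * g t) x (a * g x + f x * b).
Proof. intros Ha Hb. exact (is_derive_mult f g x a b Ha Hb Rmult_comm). Qed.
Lemma dplus (f g : R -> R) (x a b : R) : is_derive f x a -> is_derive g x b ->
  is_derive (fun t => f t + g t) x (a + b).
Proof. intros Ha Hb. exact (is_derive_plus f g x a b Ha Hb). Qed.
Lemma dminus (f g : R -> R) (x a b : R) : is_derive f x a -> is_derive g x b ->
  is_derive (fun t => f t - g t) x (a - b).
Proof. intros Ha Hb. exact (is_derive_minus f g x a b Ha Hb). Qed.
Lemma dconst (c x : R) : is_derive (fun _ => c) x 0.
Proof. apply (is_derive_const c x). Qed.
Lemma did (x : R) : is_derive (fun t => t) x 1.
Proof. apply (is_derive_id x). Qed.
Lemma dexp (f : R -> R) (x a : R) : is_derive f x a -> is_derive (fun t => exp (f t)) x (a * exp (f x)).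
Proof. intros H. exact (is_derive_comp exp f x (exp (f x)) a (is_derive_exp _) H). Qed.
Lemma dext (f g : R -> R) (x a b : R) : is_derive f x a -> (forall t, f t = g t) -> a = b -> is_derive g x b.
Proof. intros H E ->. apply (is_derive_ext f g x b E H). Qed.

Lemma cmul (f g : R -> R) (x : R) : continuous f x -> continuous g x -> continuous (fun t => f t * g t) x.
Proof. intros Ha Hb. exact (continuous_mult f g x Ha Hb). Qed.
Lemma cplus (f g : R -> R) (x : R) : continuous f x -> continuous g x -> continuous (fun t => f t + g t) x.
Proof. intros Ha Hb. exact (continuous_plus f g x Ha Hb). Qed.
Lemma cminus (f g : R -> R) (x : R) : continuous f x -> continuous g x -> continuous (fun t => f t - g t) x.
Proof. intros Ha Hb. exact (continuous_plus f (fun t => opp (g t)) x Ha (continuous_opp g x Hb)). Qed.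
Lemma cconst (c x:R) : @continuous R_UniformSpace R_UniformSpace (fun _ : R => c) x.
Proof. apply continuous_const. Qed.
Lemma cder (f : R -> R) (x a : R) : is_derive f x a -> continuous f x.
Proof. intros H. exact (@ex_derive_continuous R_AbsRing R_NormedModule f x (ex_intro _ a H)). Qed.

Lemma loc_pos x : 0 < x -> locally x (fun t => 0 < t).
Proof. intros Hx. exists (mkposreal x Hx). intros y Hy.
  change (Rabs (y - x) < x) in Hy. apply Rabs_def2 in Hy. lra. Qed.
Lemma loc_neg x : x < 0 -> locally x (fun t => t < 0).
Proof. intros Hx. assert (H: 0 < -x) by lra. exists (mkposreal _ H). intros y Hy.
  change (Rabs (y - x) < -x) in Hy. apply Rabs_def2 in Hy. lra. Qed.
Definition pw (p x : R) := if Rlt_dec 0 x then Rpower x p else 0.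
Lemma pw_pos p x : 0 < x -> pw p x = Rpower x p.
Proof. intros H; unfold pw; destruct (Rlt_dec 0 x); [auto|lra]. Qed.
Lemma pw_npos p x : x <= 0 -> pw p x = 0.
Proof. intros H; unfold pw; destruct (Rlt_dec 0 x); [lra|auto]. Qed.
Lemma pw_der p x : 0 < x -> is_derive (pw p) x (p * Rpower x (p-1)).
Proof. intros Hx. apply (is_derive_ext_loc (fun t => Rpower t p)).
  - apply (filter_imp (fun t => 0 < t)). intros t Ht. rewrite pw_pos; auto. apply loc_pos; auto.
  - apply is_derive_Reals. apply derivable_pt_lim_power; auto. Qed.
Lemma pw_cont p x : 0 < p -> continuous (pw p) x.
Proof. intros Hp. destruct (Rtotal_order x 0) as [Hx|[Hx|Hx]].
  - apply (continuous_ext_loc (pw p) (fun _ => 0) x).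
    apply (filter_imp (fun t => t < 0)). intros t Ht. rewrite pw_npos; lra. apply loc_neg; auto.
    apply cconst.
  - subst x. apply continuity_pt_filterlim.
    intros eps Heps. rewrite pw_npos by lra.
    exists (Rpower eps (/p)). split. apply exp_pos.
    intros y [_ Hy]. simpl in Hy |- *. unfold R_dist in Hy |- *. rewrite Rminus_0_r in Hy. idtac.
    unfold pw. destruct (Rlt_dec 0 y).
    + rewrite Rabs_right in Hy by lra. rewrite Rminus_0_r.
      assert (Hq: 0 < Rpower y p) by apply exp_pos. rewrite Rabs_right by lra.
      replace eps with (Rpower (Rpower eps (/p)) p).
      apply Rlt_Rpower_l; lra. rewrite Rpower_mult. rewrite Rinv_l by lra. apply Rpower_1; auto.
    + rewrite Rminus_0_r, Rabs_R0; auto.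
  - exact (cder _ _ _ (pw_der p x Hx)). Qed.

Lemma exp_le' x y : x <= y -> exp x <= exp y.
Proof. intros [H|H]. left; apply exp_increasing; auto. subst; lra. Qed.

Lemma dRInt (f : R -> R) x : (forall t, continuous f t) -> is_derive (fun r => RInt f 0 r) x (f x).
Proof. intros Hc. apply (is_derive_RInt f (fun r => RInt f 0 r) 0 x).
  - apply filter_forall. intros b. apply (@RInt_correct R_CompleteNormedModule). apply (@ex_RInt_continuous R_CompleteNormedModule). intros; auto.
  - auto. Qed.

Lemma RInt0 (f : R -> R) : RInt f 0 0 = 0.
Proof. apply (RInt_point 0 f). Qed.

Lemma cauchy (f g f' g' : R -> R) a b : a < b ->
  (forall c, a < c < b -> is_derive f c (f' c)) ->
  (forall c, a < c < b -> is_derive g c (g' c)) ->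
  (forall c, continuous f c) -> (forall c, continuous g c) ->
  exists c, a < c < b /\ (g b - g a) * f' c = (f b - f a) * g' c.
Proof. intros Hab Hf Hg Cf Cg.
  pose (pr1 := fun c (P : a < c < b) => exist (fun l => derivable_pt_abs f c l) (f' c) (proj1 (is_derive_Reals _ _ _) (Hf c P))).
  pose (pr2 := fun c (P : a < c < b) => exist (fun l => derivable_pt_abs g c l) (g' c) (proj1 (is_derive_Reals _ _ _) (Hg c P))).
  destruct (MVT f g a b pr1 pr2 Hab) as [c [P E]].
  - intros; apply continuity_pt_filterlim; apply Cf.
  - intros; apply continuity_pt_filterlim; apply Cg.
  exists c; split; auto. Qed.

Lemma mvt (f f' : R -> R) a b : a < b -> (forall c, is_derive f c (f' c)) ->
  exists c, a < c < b /\ f b - f a = f' c * (b - a).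
Proof. intros Hab H. destruct (MVT_cor2 f f' a b Hab) as [c [E P]]. intros; apply is_derive_Reals; auto. exists c; auto. Qed.

Lemma dw (Dm : R -> Prop) (f : R -> R) x l : is_derive f x l -> deriv_within Dm f x l.
Proof. intros H. apply is_derive_Reals in H. unfold deriv_within, limit1_in, limit_in.
  intros eps Heps. destruct (H eps Heps) as [d Hd]. exists d; split; [apply cond_pos|].
  intros y [[_ Hne] Hy]. simpl in *. unfold R_dist in *.
  specialize (Hd (y - x)). replace (x + (y - x)) with y in Hd by ring. apply Hd; auto. lra. Qed.

Lemma cw (Dm : R -> Prop) (f : R -> R) x : continuous f x -> cont_within Dm f x.
Proof. intros H. apply continuity_pt_filterlim in H.
  unfold continuity_pt, continue_in, limit1_in, limit_in in H. unfold cont_within, limit1_in, limit_in.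
  intros eps Heps. destruct (H eps Heps) as [a [Ha Hy]]. exists a; split; auto.
  intros y [Dy Hd]. destruct (Req_dec x y) as [<-|Hne].
  - simpl. unfold R_dist. rewrite Rminus_eq_0, Rabs_R0. auto.
  - apply Hy. split; auto. split; auto. exact I. Qed.

Section Main.
Variables A B C D dl : R.
Hypotheses (Hd: 0<dl) (HA0: 0<A) (HA1: A<1) (HB: 0<=B) (HC: 0<C) (HD: 0<=D).

Definition hA s := pw A s * exp (B * s).
Definition g r := RInt hA 0 r.
Definition M0 := Rpower dl A * exp (B * dl).
Definition K := C * dl * M0 + D * exp (B * dl) / Rpower dl (1 - A) + 1.
Definition F r := exp (- B * r) * (K - C * g r).
Definition F1 r := - B * F r - C * pw A r.
Definition I r := RInt (fun s => pw (1 - A) s * F1 s) 0 r.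
Definition phi r := (pw (1 - A) r * F r - I r) * / (1 - A).
Definition psi r := Rpower r (- A) * F r.
Definition phi2 r := - C - (A / r + B) * psi r.

Lemma Hal : 0 < 1 - A. Proof. lra. Qed.

Lemma dlin (c x : R) : is_derive (fun t => c * t) x c.
Proof. eapply dext. apply dmul. apply dconst. apply did. intros; reflexivity. cbv beta. ring. Qed.

Lemma hA_cont t : continuous hA t.
Proof. apply cmul. apply pw_cont; auto. eapply cder. apply dexp. apply dlin. Qed.

Lemma g_der x : is_derive g x (hA x).
Proof. apply (dRInt hA x hA_cont). Qed.

Lemma F_der x : is_derive F x (F1 x).
Proof. eapply dext. apply dmul. apply dexp. apply dlin. apply dminus. apply dconst.
  apply dmul. apply dconst. apply g_der. intros; reflexivity. cbv beta.
  unfold F1, F, hA.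
  assert (E: exp (- B * x) * exp (B * x) = 1).
  { rewrite <- exp_plus. replace (- B * x + B * x) with 0 by ring. apply exp_0. }
  transitivity (-B*(exp(-B*x)*(K-C*g x)) - C*pw A x*(exp(-B*x)*exp(B*x))). ring.
  rewrite E; ring. Qed.

Lemma F_cont x : continuous F x.
Proof. eapply cder. apply F_der. Qed.

Lemma F1_cont x : continuous F1 x.
Proof. unfold F1. apply cminus. apply cmul. apply cconst. apply F_cont.
  apply cmul. apply cconst. apply pw_cont; auto. Qed.

Lemma I_der x : is_derive I x (pw (1 - A) x * F1 x).
Proof. apply (dRInt (fun s => pw (1 - A) s * F1 s) x).
  intros t. apply cmul. apply pw_cont; apply Hal. apply F1_cont. Qed.

Lemma phi_cont x : continuous phi x.
Proof. unfold phi. apply cmul. apply cminus. apply cmul. apply pw_cont; apply Hal. apply F_cont.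
  eapply cder. apply I_der. apply cconst. Qed.

Lemma phi_der x : 0 < x -> is_derive phi x (psi x).
Proof. intros Hx. eapply dext. apply dmul. apply dminus. apply dmul. apply pw_der; auto.
  apply F_der. apply I_der. apply dconst. intros; reflexivity. cbv beta.
  unfold psi. replace (1 - A - 1) with (-A) by ring. field. lra. Qed.

Lemma psi_der x : 0 < x -> is_derive psi x (phi2 x).
Proof. intros Hx. eapply dext. apply dmul. apply is_derive_Reals, derivable_pt_lim_power; auto.
  apply F_der. intros; reflexivity. cbv beta.
  unfold phi2, psi, F1. rewrite pw_pos by auto.
  replace (- A - 1) with (- A + - (1)) by ring. rewrite Rpower_plus.
  rewrite !Rpower_Ropp, Rpower_1 by auto.
  assert (0 < Rpower x A) by apply exp_pos.
  field. split; lra. Qed.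

Lemma psi_cont x : 0 < x -> continuous psi x.
Proof. intros Hx. eapply cder. apply psi_der; auto. Qed.

Lemma phi2_cont x : 0 < x -> continuous phi2 x.
Proof. intros Hx. unfold phi2. apply cminus. apply cconst. apply cmul. apply cplus.
  assert (H: ex_derive (fun t => A / t) x) by (auto_derive; lra).
  exact (@ex_derive_continuous R_AbsRing R_NormedModule _ x H).
  apply cconst. apply psi_cont; auto. Qed.


Lemma g0 : g 0 = 0.
Proof. unfold g. apply RInt0. Qed.

Lemma gb c : 0 < c <= dl -> 0 <= g c <= dl * M0.
Proof. intros [Hc0 Hc1]. destruct (mvt g hA 0 c Hc0 g_der) as [xi [Hxi E]].
  rewrite g0 in E. unfold hA in E. rewrite pw_pos in E by lra.
  assert (H1: Rpower xi A <= Rpower dl A) by (apply Rle_Rpower_l; lra).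
  assert (H2: exp (B * xi) <= exp (B * dl)) by (apply exp_le'; nra).
  assert (H3: 0 < Rpower xi A) by apply exp_pos.
  assert (H4: 0 < exp (B * xi)) by apply exp_pos.
  assert (H5: Rpower xi A * exp (B * xi) <= M0) by (unfold M0; nra).
  assert (0 < Rpower xi A * exp (B * xi)) by nra.
  split; nra. Qed.

Lemma Lpos : 0 < D * exp (B * dl) / Rpower dl (1 - A) + 1.
Proof. assert (0 < exp (B * dl)) by apply exp_pos. assert (0 < Rpower dl (1 - A)) by apply exp_pos.
  assert (0 <= D * exp (B * dl) / Rpower dl (1 - A)).
  { unfold Rdiv. apply Rmult_le_pos. nra. left; apply Rinv_0_lt_compat; auto. }
  lra. Qed.

Lemma Fb c : 0 < c <= dl ->
  exp (- B * dl) * (D * exp (B * dl) / Rpower dl (1 - A) + 1) <= F c /\ F c <= K /\ 0 < F c.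
Proof. intros Hc. destruct (gb c Hc) as [G1 G2]. pose proof Lpos as HL.
  assert (E1: exp (- B * dl) <= exp (- B * c)) by (apply exp_le'; nra).
  assert (E2: exp (- B * c) <= 1) by (rewrite <- exp_0; apply exp_le'; nra).
  assert (E3: 0 < exp (- B * dl)) by apply exp_pos.
  assert (K1: D * exp (B * dl) / Rpower dl (1 - A) + 1 <= K - C * g c) by (unfold K; nra).
  assert (K2: K - C * g c <= K) by nra.
  unfold F. split; [|split]; nra. Qed.

Lemma phi0 : phi 0 = 0.
Proof. unfold phi, I. rewrite pw_npos by lra. rewrite RInt0. ring. Qed.

Lemma key r : 0 < r <= dl -> exists c, 0 < c < r /\ phi r = Rpower r (1 - A) * F c / (1 - A).
Proof. intros [Hr0 Hr1].
  destruct (cauchy phi (pw (1 - A)) psi (fun t => (1 - A) * Rpower t (1 - A - 1)) 0 r Hr0)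
    as [c [Hc E]].
  - intros c Hc. apply phi_der; lra.
  - intros c Hc. apply pw_der; lra.
  - apply phi_cont.
  - intros; apply pw_cont, Hal.
  - exists c; split; auto. rewrite phi0, (pw_npos _ 0) in E by lra. rewrite pw_pos in E by lra.
    unfold psi in E. replace (1 - A - 1) with (- A) in E by ring.
    assert (0 < Rpower c (- A)) by apply exp_pos.
    apply (Rmult_eq_reg_r (Rpower c (- A) * (1 - A))). 2: nra.
    transitivity ((Rpower r (1 - A) - 0) * (Rpower c (- A) * F c)). 2: field; lra.
    rewrite E. ring. Qed.

End Main.

Theorem lemma2p1 (A B C D delta : R) :
  0 < delta -> 0 < A -> A < 1 -> 0 <= B -> 0 < C -> 0 <= D ->
  exists phi phi1 phi2 : R -> R,
    C2_on (Ioc0 delta) phi phi1 phi2 /\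
    (forall r, Icc0 delta r -> cont_within (Icc0 delta) phi r) /\
    (forall r, Ioc0 delta r -> 0 < phi r) /\
    (forall r, Ioc0 delta r -> phi2 r + (A / r + B) * phi1 r = - C) /\
    (forall r, Ioc0 delta r -> 0 < phi1 r /\ phi2 r < 0) /\
    (forall r, Ioc0 delta r -> phi2 r - phi1 r / r <= - C) /\
    D <= phi delta /\
    (exists M, forall r, Ioc0 delta r -> phi r / Rpower r (1 - A) <= M).
Proof.
  intros Hd HA0 HA1 HB HC HD.
  exists (phi A B C D delta), (psi A B C D delta), (phi2 A B C D delta).
  assert (Hal: 0 < 1 - A) by lra.
  assert (Fb': forall c, 0 < c <= delta ->
       exp (- B * delta) * (D * exp (B * delta) / Rpower delta (1 - A) + 1) <=
       F A B C D delta c /\ F A B C D delta c <= K A B C D delta /\ 0 < F A B C D delta c)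
    by (intros; apply Fb; auto).
  assert (key': forall r, 0 < r <= delta -> exists c : R, 0 < c < r /\
         phi A B C D delta r = Rpower r (1 - A) * F A B C D delta c / (1 - A))
    by (intros; apply key; auto).
  assert (Hpsi: forall r, Ioc0 delta r -> 0 < psi A B C D delta r).
  { intros r [Hr0 Hr1]. unfold psi. destruct (Fb' r) as [_ [_ H]]; auto.
    assert (0 < Rpower r (- A)) by apply exp_pos. nra. }
  split; [|split; [|split; [|split; [|split; [|split; [|split]]]]]].
  - intros x [Hx0 Hx1]. split; [|split].
    + apply dw. apply phi_der; auto.
    + apply dw. apply psi_der; auto.
    + apply cw. apply phi2_cont; auto.
  - intros r _. apply cw. apply phi_cont; auto.
  - intros r Hr. destruct (key' r Hr) as [c [Hc E]]. rewrite E.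
    destruct (Fb' c) as [_ [_ H]]. destruct Hr; lra.
    assert (0 < Rpower r (1 - A)) by apply exp_pos.
    apply Rdiv_lt_0_compat; nra.
  - intros r Hr. unfold phi2. ring.
  - intros r Hr. split. apply Hpsi; auto. pose proof (Hpsi r Hr). destruct Hr as [Hr0 _].
    unfold phi2. assert (0 < A / r) by (apply Rdiv_lt_0_compat; lra). nra.
  - intros r Hr. pose proof (Hpsi r Hr). destruct Hr as [Hr0 _].
    unfold phi2. assert (0 < A / r) by (apply Rdiv_lt_0_compat; lra).
    assert (0 < psi A B C D delta r / r) by (apply Rdiv_lt_0_compat; lra). nra.
  - assert (Hr: Ioc0 delta delta) by (split; lra).
    destruct (key' delta Hr) as [c [Hc E]]. rewrite E.
    destruct (Fb' c) as [H1 [_ H]]. lra.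
    set (P := Rpower delta (1 - A)) in *. assert (HP: 0 < P) by apply exp_pos.
    set (E1 := exp (- B * delta)) in *. set (E2 := exp (B * delta)) in *.
    assert (HE: E1 * E2 = 1).
    { unfold E1, E2. rewrite <- exp_plus. replace (- B * delta + B * delta) with 0 by ring. apply exp_0. }
    assert (HE1: 0 < E1) by apply exp_pos.
    assert (X: P * (E1 * (D * E2 / P + 1)) = D * (E1 * E2) + P * E1) by (field; lra).
    rewrite HE in X.
    assert (Y: P * F A B C D delta c <= P * F A B C D delta c / (1 - A)).
    { assert (Z: P * F A B C D delta c / (1 - A) = P * F A B C D delta c + P * F A B C D delta c * (A / (1 - A))) by (field; lra).
      rewrite Z. assert (0 < A / (1 - A)) by (apply Rdiv_lt_0_compat; lra).
      assert (0 <= P * F A B C D delta c * (A / (1 - A))) by (apply Rmult_le_pos; [apply Rmult_le_pos; lra | lra]). lra. }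
    nra.
  - exists (K A B C D delta / (1 - A)). intros r Hr.
    destruct (key' r Hr) as [c [Hc E]]. rewrite E.
    destruct (Fb' c) as [_ [H2 H]]. destruct Hr; lra.
    assert (0 < Rpower r (1 - A)) by apply exp_pos.
    replace (Rpower r (1 - A) * F A B C D delta c / (1 - A) / Rpower r (1 - A))
      with (F A B C D delta c / (1 - A)) by (field; lra).
    apply Rmult_le_compat_r. left; apply Rinv_0_lt_compat; auto. auto.
Qed.
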